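(* Let $F\colon\mathbf{Ring}^{\mathrm{op}}\to\mathbf{Loc}$ be any functor whose restriction to commutative rings is naturally isomorphic to the Zariski spectrum functor. Then $F(R)$ is the trivial locale for every Kochen--Specker ring $R$; in particular $F(M_n(\mathbb{C}))$ is trivial for all $n\ge 3$.
   Context: $\mathbf{Ring}$ is the category of unital rings and unital ring homomorphisms; $\mathbf{Loc}$ is the category of locales. The Zariski spectrum of a commutative ring is regarded as a (coherent) locale, namely the locale whose frame is the frame of radical ideals of the ring. A locale is trivial if its frame satisfies $0=1$. A ring $R$ is Kochen--Specker if there is a ring homomorphism $M_n(\mathbb{C})\to R$ for some $n\ge 3$, where $M_n(\mathbb{C})$ is the ring of $n\times n$ complex matrices. *)

(* Defs.v *)
From HB Require Import structures.
From mathcomp Require Import all_boot all_order all_algebra.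
From mathcomp Require Import complex.
From mathcomp Require Import Rstruct.
Set Implicit Arguments. Unset Strict Implicit. Unset Printing Implicit Defensive.
Import GRing.Theory.
Local Open Scope ring_scope.

Definition Cplx : Type := complex Rdefinitions.R.

(** * Frames (= locales, via Loc = Frm^op).
    A frame: a poset with all joins (of arbitrary subsets), finite meets
    (binary meet and top), with binary meets distributing over arbitrary joins. *)
Record Frame := {
  fcar :> Type;
  fle : fcar -> fcar -> Prop;
  ftop : fcar;
  fmeet : fcar -> fcar -> fcar;
  fsup : (fcar -> Prop) -> fcar;
  fle_refl : forall x, fle x x;
  fle_trans : forall x y z, fle x y -> fle y z -> fle x z;
  fle_antisym : forall x y, fle x y -> fle y x -> x = y;
  ftop_max : forall x, fle x ftop;
  fmeet_glb : forall x y z, fle z (fmeet x y) <-> (fle z x /\ fle z y);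
  fsup_lub : forall (S : fcar -> Prop) z,
      fle (fsup S) z <-> (forall s, S s -> fle s z);
  fdistr : forall a (S : fcar -> Prop),
      fmeet a (fsup S) = fsup (fun x => exists2 s, S s & x = fmeet a s)
}.

Definition fbot (L : Frame) : L := fsup (fun _ : L => False).

Definition trivial_locale (L : Frame) : Prop := fbot L = ftop L.

(** Frame homomorphisms: preserve finite meets and arbitrary joins.
    A locale map X -> Y is a frame homomorphism O(Y) -> O(X). *)
Definition frame_hom (L M : Frame) (h : L -> M) : Prop :=
  [/\ h (ftop L) = ftop M,
      forall x y, h (fmeet x y) = fmeet (h x) (h y)
    & forall S : L -> Prop, h (fsup S) = fsup (fun y => exists2 x, S x & y = h x)].

(** * Functors Ring^op -> Loc, i.e. covariant functors Ring -> Frm.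
    Ring = unital (possibly zero) rings and unital ring homomorphisms. *)
Record RingLocFunctor := {
  Fob : pzRingType -> Frame;
  (* for f : R -> S, F(f) : F(S) -> F(R) in Loc, i.e. a frame hom F(R) -> F(S) *)
  Fmap : forall (R S : pzRingType), {rmorphism R -> S} -> Fob R -> Fob S;
  Fmap_hom : forall (R S : pzRingType) (f : {rmorphism R -> S}), frame_hom (Fmap f);
  Fmap_id : forall (R : pzRingType) (f : {rmorphism R -> R}),
      (forall r, f r = r) -> forall u, Fmap f u = u;
  Fmap_comp : forall (R S T : pzRingType) (f : {rmorphism R -> S}) (g : {rmorphism S -> T})
      (h : {rmorphism R -> T}),
      (forall r, h r = g (f r)) -> forall u, Fmap h u = Fmap g (Fmap f u)
}.

(** * The Zariski spectrum: the frame of radical ideals of a commutative ring. *)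
Definition radical_ideal (A : comPzRingType) (I : A -> Prop) : Prop :=
  [/\ I 0,
      forall x y, I x -> I y -> I (x + y),
      forall a x, I x -> I (a * x)
    & forall x n, I (x ^+ n) -> I x].

(** For f : A -> B, the frame map Rad(A) -> Rad(B) underlying Spec(f):
    I |-> the radical of the ideal generated by f(I), i.e. the smallest
    radical ideal of B containing f(I). *)
Definition rad_ext (A B : comPzRingType) (f : {rmorphism A -> B})
    (I : A -> Prop) : B -> Prop :=
  fun b => forall J : B -> Prop, radical_ideal J ->
    (forall a, I a -> J (f a)) -> J b.

(** A natural isomorphism between the restriction of F to commutative rings
    and the Zariski spectrum functor: for each commutative ring A an
    isomorphism of frames (equivalently, of posets) between F(A) and the
    frame of radical ideals of A (ordered by inclusion), natural in ring
    homomorphisms between commutative rings. *)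
Definition zariski_nat_iso (F : RingLocFunctor)
    (phi : forall A : comPzRingType, Fob F A -> (A -> Prop)) : Prop :=
  [/\
      forall (A : comPzRingType) (u : Fob F A), radical_ideal (phi A u),
      forall (A : comPzRingType) (I : A -> Prop), radical_ideal I ->
        exists u : Fob F A, forall a, phi A u a <-> I a,
      forall (A : comPzRingType) (u v : Fob F A),
        fle u v <-> (forall a, phi A u a -> phi A v a)
    &
      forall (A B : comPzRingType) (f : {rmorphism A -> B}) (u : Fob F A),
        forall b, phi B (@Fmap F A B f u) b <-> rad_ext f (phi A u) b].

Definition kochen_specker (R : pzRingType) : Prop :=
  exists m : nat, exists f : {rmorphism 'M[Cplx]_(m.+3) -> R}, True.

Arguments zariski_nat_iso : clear implicits.

(* Main.v *)
Require Import Defs.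
From HB Require Import structures.
From mathcomp Require Import all_boot all_order all_algebra.
From mathcomp Require Import complex.
From mathcomp Require Import Rstruct.
From Stdlib Require Import ClassicalEpsilon.
From mathcomp Require Import ring.
Set Implicit Arguments. Unset Strict Implicit. Unset Printing Implicit Defensive.
Import GRing.Theory.
Local Open Scope ring_scope.

Lemma fmeet_l (L : Frame) (x y : L) : fle (fmeet x y) x.
Proof. by case: (proj1 (fmeet_glb x y (fmeet x y)) (fle_refl _)). Qed.
Lemma fmeet_r (L : Frame) (x y : L) : fle (fmeet x y) y.
Proof. by case: (proj1 (fmeet_glb x y (fmeet x y)) (fle_refl _)). Qed.
Lemma fmeet_le (L : Frame) (x y z : L) : fle z x -> fle z y -> fle z (fmeet x y).
Proof. by move=> h1 h2; apply/fmeet_glb. Qed.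
Lemma fsup_ub (L : Frame) (S : L -> Prop) s : S s -> fle s (fsup S).
Proof. by move=> Ss; apply: (proj1 (fsup_lub S (fsup S)) (fle_refl _)). Qed.
Lemma fsup_le (L : Frame) (S : L -> Prop) z : (forall s, S s -> fle s z) -> fle (fsup S) z.
Proof. by move=> h; apply/fsup_lub. Qed.
Lemma fbot_le (L : Frame) (x : L) : fle (fbot L) x.
Proof. by apply: fsup_le. Qed.
Lemma fle_top_eq (L : Frame) : fle (ftop L) (fbot L) -> trivial_locale L.
Proof. by move=> h; apply: fle_antisym => //; apply: fbot_le. Qed.

Lemma cover_bot (L : Frame) (x : L) (S : L -> Prop) :
  fle x (fsup S) -> (forall s, S s -> fle (fmeet x s) (fbot L)) -> fle x (fbot L).
Proof.
move=> hx hs.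
have e : x = fmeet x (fsup S).
  apply: fle_antisym; first by apply: fmeet_le => //; apply: fle_refl.
  exact: fmeet_l.
rewrite e fdistr; apply: fsup_le => y [s Ss ->]; exact: hs.
Qed.

Lemma hom_mono (L M : Frame) (h : L -> M) : frame_hom h ->
  forall x y, fle x y -> fle (h x) (h y).
Proof.
case=> _ hm _ x y le.
have e : x = fmeet x y by apply: fle_antisym; [apply: fmeet_le => //; apply: fle_refl|apply: fmeet_l].
rewrite e hm; exact: fmeet_r.
Qed.

Lemma hom_bot (L M : Frame) (h : L -> M) : frame_hom h -> h (fbot L) = fbot M.
Proof.
case=> _ _ hs; rewrite /fbot hs; apply: fle_antisym; last exact: fbot_le.
by apply: fsup_le => y [].
Qed.

Lemma hom_top (L M : Frame) (h : L -> M) : frame_hom h -> h (ftop L) = ftop M.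
Proof. by case. Qed.

Definition KF (d : nat) : Type := {ffun 'I_d -> Cplx}.
HB.instance Definition _ d := GRing.PzRing.on (KF d).
Fact KF_mulC d : commutative (@GRing.mul (KF d)).
Proof. by move=> f g; apply/ffunP=> i; rewrite !ffunE mulrC. Qed.
HB.instance Definition _ d := GRing.PzRing_hasCommutativeMul.Build (KF d) (@KF_mulC d).

Lemma KF_mulE d (f g : KF d) i : (f * g) i = f i * g i.
Proof. by rewrite ffunE. Qed.
Lemma KF_addE d (f g : KF d) i : (f + g) i = f i + g i.
Proof. by rewrite ffunE. Qed.
Lemma KF_oppE d (f : KF d) i : (- f) i = - f i.
Proof. by rewrite ffunE. Qed.
Lemma KF_0E d i : (0 : KF d) i = 0.
Proof. by rewrite ffunE. Qed.
Lemma KF_1E d i : (1 : KF d) i = 1.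
Proof. by rewrite ffunE. Qed.
Lemma KF_expE d (f : KF d) n i : (f ^+ n) i = f i ^+ n.
Proof. elim: n => [|n IH]; first by rewrite !expr0 KF_1E. by rewrite !exprS KF_mulE IH. Qed.



Definition validb n d (P : 'I_d -> 'M[Cplx]_n.+1) : bool :=
  [forall i, forall j, P i * P j == (if i == j then P i else 0)] && (\sum_i P i == 1).

Definition homfun n d (P : 'I_d.+1 -> 'M[Cplx]_n.+1) (f : KF d.+1) : 'M[Cplx]_n.+1 :=
  if validb P then \sum_i f i *: P i else (f ord0)%:M.

Lemma validP n d (P : 'I_d -> 'M[Cplx]_n.+1) :
  validb P -> (forall i j, P i * P j = if i == j then P i else 0) /\ \sum_i P i = 1.
Proof.
case/andP=> /forallP h /eqP s; split=> // i j.
by move: (h i) => /forallP /(_ j) /eqP.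
Qed.

Lemma homfun_zmod n d (P : 'I_d.+1 -> 'M[Cplx]_n.+1) : GRing.zmod_morphism (homfun P).
Proof.
move=> f g; rewrite /homfun; case: (validb P).
  rewrite -sumrB; apply: eq_bigr => i _.
  by rewrite KF_addE KF_oppE scalerDl scaleNr.
by rewrite KF_addE KF_oppE raddfB.
Qed.

Lemma homfun_monoid n d (P : 'I_d.+1 -> 'M[Cplx]_n.+1) : GRing.monoid_morphism (homfun P).
Proof.
rewrite /homfun; case hv: (validb P); last first.
  by split; [rewrite KF_1E | move=> f g; rewrite KF_mulE scalar_mxM].
have [hP hs] := validP hv.
split.
  by rewrite -hs; apply: eq_bigr => i _; rewrite KF_1E scale1r.
move=> f g; rewrite big_distrl /=; apply: eq_bigr => i _.
rewrite big_distrr /= (bigD1 i) //= big1 ?addr0.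
  by rewrite -scalerAl -scalerAr scalerA hP eqxx KF_mulE.
by move=> j /negbTE ji; rewrite -scalerAl -scalerAr hP eq_sym ji !scaler0.
Qed.

HB.instance Definition _ n d (P : 'I_d.+1 -> 'M[Cplx]_n.+1) :=
  GRing.isZmodMorphism.Build (KF d.+1) 'M[Cplx]_n.+1 (homfun P) (@homfun_zmod n d P).
HB.instance Definition _ n d (P : 'I_d.+1 -> 'M[Cplx]_n.+1) :=
  GRing.isMonoidMorphism.Build (KF d.+1) 'M[Cplx]_n.+1 (homfun P) (@homfun_monoid n d P).



Definition J d (i : 'I_d) : KF d -> Prop := fun x => forall l, l != i -> x l = 0.

Lemma J_rad d (i : 'I_d) : radical_ideal (J i).
Proof.
split.
- by move=> l _; rewrite KF_0E.
- by move=> x y hx hy l li; rewrite KF_addE hx // hy // addr0.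
- by move=> a x hx l li; rewrite KF_mulE hx // mulr0.
- move=> x n hx l li; have := hx l li; rewrite KF_expE => /eqP.
  by rewrite expf_eq0 => /andP [_ /eqP].
Qed.

Definition ebas d (i : 'I_d) : KF d := [ffun l => (l == i)%:R].

Lemma sum_ebas d : \sum_i ebas i = 1 :> KF d.
Proof.
apply/ffunP=> l; rewrite sum_ffunE KF_1E (bigD1 l) //= big1 ?addr0.
  by rewrite ffunE eqxx.
by move=> j jl; rewrite ffunE eq_sym (negbTE jl).
Qed.

Lemma ideal_sum (A : comPzRingType) (I : A -> Prop) (k : nat) (f : 'I_k -> A) :
  radical_ideal I -> (forall i, I (f i)) -> I (\sum_i f i).
Proof.
case=> h0 hD _ _ hf; apply: (big_ind I) => //.
Qed.




Lemma phi_ext (F : RingLocFunctor) phi (H : zariski_nat_iso F phi)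
  (A : comPzRingType) (u v : Fob F A) :
  (forall a, phi A u a <-> phi A v a) -> u = v.
Proof.
case: H => _ _ hemb _ h; apply: fle_antisym; apply/hemb => a; by case: (h a).
Qed.

Lemma exU (F : RingLocFunctor) phi (H : zariski_nat_iso F phi) d (i : 'I_d) :
  exists u : Fob F (KF d), forall a, phi (KF d) u a <-> J i a.
Proof. case: H => _ hs _ _; apply: hs; exact: J_rad. Qed.

Definition U (F : RingLocFunctor) phi (H : zariski_nat_iso F phi) d (i : 'I_d) :
  Fob F (KF d) := proj1_sig (constructive_indefinite_description _ (exU H i)).

Lemma UP (F : RingLocFunctor) phi (H : zariski_nat_iso F phi) d (i : 'I_d) a :
  phi (KF d) (U H i) a <-> J i a.
Proof. rewrite /U; case: constructive_indefinite_description => u /=; exact. Qed.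

Lemma KF_top (F : RingLocFunctor) phi (H : zariski_nat_iso F phi) d :
  fle (ftop (Fob F (KF d))) (fsup (fun y => exists i, y = U H (i : 'I_d))).
Proof.
have Hc := H; case: Hc => hrad _ hemb _.
set s := fsup _.
have hi : forall i, phi (KF d) s (ebas i).
  move=> i; have : fle (U H i) s by apply: fsup_ub; exists i.
  move/hemb; apply; apply/UP => l li; by rewrite ffunE (negbTE li).
apply/hemb => a _.
have h1 : phi (KF d) s 1.
  rewrite -sum_ebas; apply: ideal_sum => //; exact: hrad.
have := hrad _ s; case=> _ _ hm _.
by rewrite -[a]mulr1; apply: hm.
Qed.

Lemma KF_disj (F : RingLocFunctor) phi (H : zariski_nat_iso F phi) d (i j : 'I_d) :
  i != j -> fle (fmeet (U H i) (U H j)) (fbot _).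
Proof.
move=> ij; have Hc := H; case: Hc => hrad _ hemb _.
apply/hemb => a ha.
have a0 : a = 0.
  apply/ffunP=> l; rewrite KF_0E.
  have /hemb /(_ a ha) /UP hai := fmeet_l (U H i) (U H j).
  have /hemb /(_ a ha) /UP haj := fmeet_r (U H i) (U H j).
  case: (eqVneq l i) => [-> | li]; last by apply: hai.
  by apply: haj.
by rewrite a0; case: (hrad _ (fbot (Fob F (KF d)))).
Qed.

Definition o1 : 'I_2 := @Ordinal 2 1 isT.
Lemma I2_cases (k : 'I_2) : k = ord0 \/ k = o1.
Proof. by case: k => [[|[|k]] Hk] //; [left|right]; apply: val_inj. Qed.
Lemma o1_neq : (o1 == ord0) = false. Proof. by []. Qed.

Definition gfun d (i : 'I_d.+1) (f : KF 2) : KF d.+1 :=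
  [ffun l => if l == i then f ord0 else f o1].

Lemma gfun_zmod d (i : 'I_d.+1) : GRing.zmod_morphism (gfun i).
Proof.
by move=> f g; apply/ffunP=> l; rewrite !ffunE; case: (l == i); rewrite ?KF_addE ?KF_oppE.
Qed.
Lemma gfun_monoid d (i : 'I_d.+1) : GRing.monoid_morphism (gfun i).
Proof.
split; first by apply/ffunP=> l; rewrite !ffunE; case: (l == i); rewrite ?KF_1E ?ffunE.
by move=> f g; apply/ffunP=> l; rewrite !ffunE; case: (l == i); rewrite ?KF_mulE.
Qed.
HB.instance Definition _ d (i : 'I_d.+1) :=
  GRing.isZmodMorphism.Build (KF 2) (KF d.+1) (gfun i) (@gfun_zmod d i).
HB.instance Definition _ d (i : 'I_d.+1) :=
  GRing.isMonoidMorphism.Build (KF 2) (KF d.+1) (gfun i) (@gfun_monoid d i).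

Definition fam2 n (p : 'M[Cplx]_n.+1) (k : 'I_2) : 'M[Cplx]_n.+1 :=
  if k == ord0 then p else 1 - p.

Lemma validI n d (P : 'I_d -> 'M[Cplx]_n.+1) :
  (forall i j, P i * P j = if i == j then P i else 0) -> \sum_i P i = 1 -> validb P.
Proof.
move=> h s; apply/andP; split; last by apply/eqP.
by apply/forallP=> i; apply/forallP=> j; rewrite h.
Qed.

Lemma sum2 (V : zmodType) (F : 'I_2 -> V) : \sum_k F k = F ord0 + F o1.
Proof.
rewrite big_ord_recl big_ord_recl big_ord0 addr0; congr (_ + F _).
by apply: val_inj.
Qed.

Lemma fam2_valid n (p : 'M[Cplx]_n.+1) : p * p = p -> validb (fam2 p).
Proof.
move=> pp; apply: validI; last by rewrite sum2 /fam2 /= ?o1_neq addrC subrK.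
move=> i j; case: (I2_cases i) => ->; case: (I2_cases j) => -> //=;
  rewrite /fam2 /= ?o1_neq ?eqxx //.
- by rewrite mulrBr mulr1 pp subrr.
- by rewrite mulrBl mul1r pp subrr.
- by rewrite mulrBr mulr1 mulrBl mul1r pp subrr subr0.
Qed.

Definition aa (F : RingLocFunctor) phi (H : zariski_nat_iso F phi) n
  (p : 'M[Cplx]_n.+1) : Fob F 'M[Cplx]_n.+1 :=
  @Fmap F _ _ (homfun (fam2 p)) (U H ord0).

Lemma homfun_valid n d (P : 'I_d.+1 -> 'M[Cplx]_n.+1) f :
  validb P -> homfun P f = \sum_i f i *: P i.
Proof. by rewrite /homfun => ->. Qed.

Lemma consistency (F : RingLocFunctor) phi (H : zariski_nat_iso F phi) n d
  (P : 'I_d.+1 -> 'M[Cplx]_n.+1) (i : 'I_d.+1) :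
  validb P -> @Fmap F _ _ (homfun P) (U H i) = aa H (P i).
Proof.
move=> hv; have [hP hs] := validP hv.
have pp : P i * P i = P i by rewrite hP ?eqxx.
have hv2 := fam2_valid pp.
have comp : forall f, homfun (fam2 (P i)) f = homfun P (gfun i f).
  move=> f; rewrite !homfun_valid // sum2 /fam2 /= ?o1_neq ?eqxx.
  rewrite (bigD1 i) //= ffunE eqxx; congr (_ + _).
  have e : 1 - P i = \sum_(l | l != i) P l by rewrite -hs (bigD1 i) //= addrC addrK.
  rewrite e scaler_sumr.
  by apply: eq_bigr => l /negbTE li; rewrite ffunE li.
rewrite /aa (Fmap_comp (f := gfun i) (g := homfun P) (h := homfun (fam2 (P i)))) //.
congr (@Fmap F _ _ _ _).
have Hc := H; case: Hc => hrad _ _ hnat.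
apply: (phi_ext H) => b.
rewrite (hnat (KF 2) (KF d.+1) (gfun i : {rmorphism KF 2 -> KF d.+1})) UP.
split.
move=> hb J' hJ' hsub.
have : J' (gfun i (ebas ord0)).
  apply: hsub; apply/UP => l l0; by rewrite ffunE (negbTE l0).
case: hJ' => _ _ hm _ /(hm b).
suff -> : b * gfun i (ebas ord0) = b by [].
apply/ffunP=> l; rewrite KF_mulE !ffunE.
case: (eqVneq l i) => [_|li]; first by rewrite eqxx mulr1.
by rewrite hb // mul0r.
move=> hb; refine (hb _ (J_rad i) _).
by move=> a /UP ha l li; rewrite ffunE (negbTE li); apply: ha.
Qed.

Lemma ctx_top (F : RingLocFunctor) phi (H : zariski_nat_iso F phi) n d
  (P : 'I_d.+1 -> 'M[Cplx]_n.+1) :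
  validb P -> fle (ftop _) (fsup (fun y => exists i, y = aa H (P i))).
Proof.
move=> hv; have hh := Fmap_hom F (homfun P).
rewrite -(hom_top hh).
apply: fle_trans (hom_mono hh (KF_top H d.+1)) _.
case: hh => _ _ ->; apply: fsup_le => y [x [i ->] ->].
apply: fsup_ub; exists i; exact: consistency.
Qed.

Lemma ctx_disj (F : RingLocFunctor) phi (H : zariski_nat_iso F phi) n d
  (P : 'I_d.+1 -> 'M[Cplx]_n.+1) (i j : 'I_d.+1) :
  validb P -> i != j -> fle (fmeet (aa H (P i)) (aa H (P j))) (fbot _).
Proof.
move=> hv ij; have hh := Fmap_hom F (homfun P).
rewrite -!consistency //.
have := hh; case=> _ hm _; rewrite -hm -(hom_bot hh).
apply: hom_mono => //; exact: KF_disj.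
Qed.

Definition famS n (s : seq 'M[Cplx]_n.+1) d (k : 'I_d) := nth 0 s k.

Lemma orth_pair (F : RingLocFunctor) phi (H : zariski_nat_iso F phi) n
  (p q : 'M[Cplx]_n.+1) :
  p * p = p -> q * q = q -> p * q = 0 -> q * p = 0 ->
  fle (fmeet (aa H p) (aa H q)) (fbot _).
Proof.
move=> hp hq hpq hqp.
have hv : validb (@famS n [:: p; q; 1 - (p + q)] 3).
  apply: validI; last first.
    rewrite big_ord_recl big_ord_recl big_ord_recl big_ord0 /famS /=.
    by rewrite addr0 addrA addrC subrK.
  have ps : p * (p + q) = p by rewrite mulrDr hp hpq addr0.
  have qs : q * (p + q) = q by rewrite mulrDr hq hqp add0r.
  have sp : (p + q) * p = p by rewrite mulrDl hp hqp addr0.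
  have sq : (p + q) * q = q by rewrite mulrDl hq hpq add0r.
  have ss : (p + q) * (p + q) = p + q by rewrite mulrDl ps qs.
  move=> [[|[|[|i]]] Hi] // [[|[|[|j]]] Hj] //=; rewrite /famS /=;
  rewrite ?mulrBl ?mulrBr ?mul1r ?mulr1 ?ps ?qs ?sp ?sq ?ss ?subrr ?subr0 //.
have := ctx_disj H (i := ord0) (j := lift ord0 ord0) hv isT.
by rewrite /famS /=.
Qed.

Lemma ctx4 (F : RingLocFunctor) phi (H : zariski_nat_iso F phi) n
  (p q r : 'M[Cplx]_n.+1) :
  p * p = p -> q * q = q -> r * r = r ->
  p * q = 0 -> q * p = 0 -> p * r = 0 -> r * p = 0 -> q * r = 0 -> r * q = 0 ->
  fle (ftop _) (fsup (fun y => y = aa H p \/ y = aa H q \/ y = aa H r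
                              \/ y = aa H (1 - (p + q + r)))).
Proof.
move=> hp hq hr hpq hqp hpr hrp hqr hrq.
have hv : validb (@famS n [:: p; q; r; 1 - (p + q + r)] 4).
  apply: validI; last first.
    rewrite !big_ord_recl big_ord0 /famS /=.
    by rewrite addr0 !addrA addrAC subrr add0r.
  have ps : p * (p + q + r) = p by rewrite !mulrDr hp hpq hpr !addr0.
  have qs : q * (p + q + r) = q by rewrite !mulrDr hq hqp hqr add0r addr0.
  have rs : r * (p + q + r) = r by rewrite !mulrDr hr hrp hrq !add0r.
  have sp : (p + q + r) * p = p by rewrite !mulrDl hp hqp hrp !addr0.
  have sq : (p + q + r) * q = q by rewrite !mulrDl hq hpq hrq add0r addr0.
  have sr : (p + q + r) * r = r by rewrite !mulrDl hr hpr hqr !add0r.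
  have ss : (p + q + r) * (p + q + r) = p + q + r by rewrite mulrDl mulrDl ps qs rs.
  move=> [[|[|[|[|i]]]] Hi] // [[|[|[|[|j]]]] Hj] //=; rewrite /famS /=;
  rewrite ?mulrBl ?mulrBr ?mul1r ?mulr1 ?ps ?qs ?rs ?sp ?sq ?sr ?ss ?subrr ?subr0 //.
apply: fle_trans (ctx_top H hv) _.
apply: fsup_le => y [i ->]; apply: fsup_ub.
by case: i => [[|[|[|[|i]]]] Hi] //=; rewrite /famS /=; tauto.
Qed.

Lemma ctx_std (F : RingLocFunctor) phi (H : zariski_nat_iso F phi) n :
  fle (ftop _) (fsup (fun y => exists j : 'I_n.+1, y = aa H (delta_mx j j))).
Proof.
have hv : validb (fun j : 'I_n.+1 => (delta_mx j j : 'M[Cplx]_n.+1)).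
  apply: validI; last by rewrite -mx1_sum_delta.
  move=> i j; rewrite -mulmxE mul_delta_mx_cond.
  by case: eqP => [->|]; rewrite ?mulr1n ?mulr0n.
exact: (ctx_top H hv).
Qed.

Definition vec3 := (int * int * int)%type.
Definition cf (v : vec3) (a : nat) : int :=
  match a with 0 => v.1.1 | 1 => v.1.2 | _ => v.2 end.
Definition dot (u v : vec3) : int := cf u 0 * cf v 0 + cf u 1 * cf v 1 + cf u 2 * cf v 2.

Definition i1 m : 'I_m.+3 := @Ordinal m.+3 1 isT.

Definition pos m (k i : 'I_m.+3) : option nat :=
  if val i == 0%N then Some 0%N else if val i == 1%N then Some 1%N
  else if i == k then Some 2%N else None.

Definition coord m (k : 'I_m.+3) (v : vec3) (i : 'I_m.+3) : Cplx :=
  if pos k i is Some a then (cf v a)%:~R else 0.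

Definition Pm m (k : 'I_m.+3) (v : vec3) : 'M[Cplx]_(m.+3) :=
  \matrix_(i, j) (coord k v i * coord k v j * ((dot v v)%:~R)^-1).

Lemma pos0 m (k : 'I_m.+3) : pos k ord0 = Some 0%N. Proof. by []. Qed.
Lemma pos1 m (k : 'I_m.+3) : pos k (i1 m) = Some 1%N. Proof. by []. Qed.
Lemma posk m (k : 'I_m.+3) : (2 <= k)%N -> pos k k = Some 2%N.
Proof.
by rewrite /pos; case: k => [[|[|k]] Hk] //= _; rewrite eqxx.
Qed.
Lemma pos_some m (k i : 'I_m.+3) a : (2 <= k)%N -> pos k i = Some a ->
  (a < 3)%N /\ i = (if a == 0%N then ord0 else if a == 1%N then i1 m else k).
Proof.
move=> hk; rewrite /pos.
case: eqP => [h0 [<-]|h0]; first by split=> //; apply: val_inj.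
case: eqP => [h1 [<-]|h1]; first by split=> //; apply: val_inj.
by case: eqP => // -> [<-].
Qed.
Lemma pos_none m (k i : 'I_m.+3) : pos k i = None ->
  [/\ i != ord0, i != i1 m & i != k].
Proof.
rewrite /pos => h.
split; apply/eqP => e; move: h; rewrite e //=.
by rewrite eqxx; case: ifP => //; case: ifP.
Qed.

Lemma sum_coord m (k : 'I_m.+3) (u v : vec3) : (2 <= k)%N ->
  \sum_i coord k u i * coord k v i = (dot u v)%:~R.
Proof.
move=> hk.
have hk0 : k != ord0 by apply/eqP => e; move: hk; rewrite e.
have hk1 : k != i1 m by apply/eqP => e; move: hk; rewrite e.
rewrite (bigD1 ord0) //= (bigD1 (i1 m)) //= (bigD1 k) /=; last by rewrite hk0 hk1.
rewrite big1 ?addr0.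
  by rewrite /coord pos0 pos1 posk // /dot !rmorphD !rmorphM /= !addrA.
move=> i /andP [/andP [i0 ii1] ik].
rewrite /coord; case e: (pos k i) => [a|] //; last by rewrite mul0r.
have [_ ea] := pos_some hk e.
move: i0 ii1 ik; rewrite ea; case: (a == 0%N); first by rewrite eqxx.
by case: (a == 1%N); rewrite eqxx // andbF.
Qed.

Lemma Pm_mul m (k : 'I_m.+3) (u v : vec3) : (2 <= k)%N ->
  Pm k u * Pm k v = ((dot u v)%:~R * ((dot u u)%:~R)^-1 * ((dot v v)%:~R)^-1)
     *: \matrix_(i, j) (coord k u i * coord k v j).
Proof.
move=> hk; apply/matrixP => i j; rewrite -mulmxE !mxE.
under eq_bigr do rewrite !mxE.
rewrite (eq_bigr (fun l => (coord k u i * coord k v j * ((dot u u)%:~R)^-1 *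
   ((dot v v)%:~R)^-1) * (coord k u l * coord k v l))); last by move=> l _; ring.
by rewrite -mulr_sumr sum_coord //; ring.
Qed.

Lemma Pm_orth m (k : 'I_m.+3) (u v : vec3) : (2 <= k)%N -> dot u v = 0 ->
  Pm k u * Pm k v = 0.
Proof. by move=> hk e; rewrite Pm_mul // e mul0r mul0r scale0r. Qed.

Lemma Pm_idem m (k : 'I_m.+3) (u : vec3) : (2 <= k)%N -> dot u u != 0 ->
  Pm k u * Pm k u = Pm k u.
Proof.
move=> hk nz; rewrite Pm_mul //.
have nz' : ((dot u u)%:~R : Cplx) != 0 by rewrite intr_eq0.
apply/matrixP => i j; rewrite !mxE; field; exact: nz'.
Qed.

Definition S3 m (k : 'I_m.+3) (u v w : vec3) : 'M[Cplx]_(m.+3) := Pm k u + Pm k v + Pm k w.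

Definition complC (u v w : vec3) : Prop := forall a b : nat, (a < 3)%N -> (b < 3)%N ->
  (cf u a * cf u b)%:~R / (dot u u)%:~R + (cf v a * cf v b)%:~R / (dot v v)%:~R
  + (cf w a * cf w b)%:~R / (dot w w)%:~R = (a == b)%:R :> Cplx.

Lemma S_row m (k : 'I_m.+3) u v w j l a : (2 <= k)%N -> complC u v w ->
  pos k j = Some a -> S3 k u v w j l = (l == j)%:R.
Proof.
move=> hk hc e1; rewrite !mxE /coord e1.
have [a3 ej] := pos_some hk e1.
case e2 : (pos k l) => [b|].
  have [b3 el] := pos_some hk e2.
  rewrite -!rmorphM /= hc //.
  case: (eqVneq a b) => [ab|ab].
    by subst b; rewrite -ej in el; rewrite el !eqxx.
  have -> : (l == j) = false.
    apply/negbTE/eqP => lj; move: e2; rewrite lj e1 => -[] ba.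
    by move: ab; rewrite ba eqxx.
  by [].
have -> : (l == j) = false.
  by apply/negbTE/eqP => lj; move: e2; rewrite lj e1.
by rewrite !mulr0 !mul0r !addr0.
Qed.

Lemma delta_S m (k : 'I_m.+3) u v w j a : (2 <= k)%N -> complC u v w ->
  pos k j = Some a -> delta_mx j j * S3 k u v w = delta_mx j j.
Proof.
move=> hk hc e1; apply/matrixP => i l; rewrite -mulmxE !mxE.
rewrite (bigD1 j) //= big1 ?addr0.
  by rewrite mxE eqxx andbT (S_row _ hk hc e1) -natrM mulnb.
by move=> r /negbTE rj; rewrite mxE rj andbF mul0r.
Qed.

Lemma S_sym m (k : 'I_m.+3) u v w i j : S3 k u v w i j = S3 k u v w j i.
Proof. by rewrite !mxE; ring. Qed.

Lemma S_delta m (k : 'I_m.+3) u v w j a : (2 <= k)%N -> complC u v w ->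
  pos k j = Some a -> S3 k u v w * delta_mx j j = delta_mx j j.
Proof.
move=> hk hc e1; apply/matrixP => i l; rewrite -mulmxE !mxE.
rewrite (bigD1 j) //= big1 ?addr0.
  have hs : S3 k u v w i j = (i == j)%:R by rewrite S_sym (S_row _ hk hc e1).
  move: hs; rewrite [S3 _ _ _ _ _ _]mxE => ->.
  by rewrite [delta_mx _ _ _ _]mxE eqxx /= -natrM mulnb andbC.
by move=> r /negbTE rj; rewrite [delta_mx _ _ _ _]mxE rj mulr0.
Qed.

Inductive tree := Leaf of nat & nat | Node of nat & tree & tree & tree.




Fixpoint check (vecs : seq vec3) (trips : seq (nat * nat * nat)) (ch : seq nat) (T : tree) : bool :=
  match T with
  | Leaf u v => [&& (u \in ch), (v \in ch),
      dot (nth (0,0,0) vecs u) (nth (0,0,0) vecs u) != 0,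
      dot (nth (0,0,0) vecs v) (nth (0,0,0) vecs v) != 0 &
      dot (nth (0,0,0) vecs u) (nth (0,0,0) vecs v) == 0]
  | Node t c1 c2 c3 =>
      let: (x, y, z) := nth (0%N, 0%N, 0%N) trips t in
      [&& (t < size trips)%N, check vecs trips (x :: ch) c1, check vecs trips (y :: ch) c2
        & check vecs trips (z :: ch) c3]
  end.

Fixpoint meetl (L : Frame) (b : nat -> L) (x : L) (ch : seq nat) : L :=
  if ch is c :: ch' then fmeet (meetl b x ch') (b c) else x.

Lemma meetl_x (L : Frame) (b : nat -> L) x ch : fle (meetl b x ch) x.
Proof.
elim: ch => [|c ch IH] /=; first exact: fle_refl.
exact: fle_trans (fmeet_l _ _) IH.
Qed.

Lemma meetl_b (L : Frame) (b : nat -> L) x ch c : c \in ch -> fle (meetl b x ch) (b c).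
Proof.
elim: ch => [|c' ch IH] //=; rewrite inE => /orP [/eqP ->|h]; first exact: fmeet_r.
exact: fle_trans (fmeet_l _ _) (IH h).
Qed.

Lemma check_sound (L : Frame) (b : nat -> L) (x : L) vecs trips :
  (forall t, (t < size trips)%N -> let: (p, q, r) := nth (0%N, 0%N, 0%N) trips t in
      fle x (fsup (fun s => s = b p \/ s = b q \/ s = b r))) ->
  (forall u v, dot (nth (0,0,0) vecs u) (nth (0,0,0) vecs u) != 0 ->
      dot (nth (0,0,0) vecs v) (nth (0,0,0) vecs v) != 0 ->
      dot (nth (0,0,0) vecs u) (nth (0,0,0) vecs v) = 0 ->
      fle (fmeet (b u) (b v)) (fbot L)) ->
  forall T ch, check vecs trips ch T -> fle (meetl b x ch) (fbot L).
Proof.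
move=> hctx horth; elim=> [u v|t c1 IH1 c2 IH2 c3 IH3] ch /=.
  case/and5P=> hu hv nu nv /eqP huv.
  apply: fle_trans (horth _ _ nu nv huv).
  by apply: fmeet_le; apply: meetl_b.
have := hctx t; case: (nth _ trips t) => [[p q] r] h.
case/and4P=> ht h1 h2 h3.
apply: (cover_bot (fle_trans (meetl_x _ _ _) (h ht))) => s [->|[->|->]].
- exact: (IH1 _ h1).
- exact: (IH2 _ h2).
- exact: (IH3 _ h3).
Qed.

Lemma cover_minus (L : Frame) (x p q r e : L) :
  fle (ftop L) (fsup (fun y => y = p \/ y = q \/ y = r \/ y = e)) ->
  fle (fmeet x e) (fbot L) ->
  fle x (fsup (fun s => s = p \/ s = q \/ s = r)).
Proof.
move=> ht he.
have ex : x = fmeet x (ftop L).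
  by apply: fle_antisym; [apply: fmeet_le; [apply: fle_refl|apply: ftop_max]|apply: fmeet_l].
have : fle x (fmeet x (fsup (fun y => y = p \/ y = q \/ y = r \/ y = e))).
  by apply: fmeet_le; [apply: fle_refl|apply: fle_trans ht; apply: ftop_max].
rewrite fdistr => h; apply: fle_trans h _.
apply: fsup_le => y [s hs ->].
case: hs => [->|[->|[->|->]]].
- apply: fle_trans (fmeet_r _ _) _; apply: fsup_ub; tauto.
- apply: fle_trans (fmeet_r _ _) _; apply: fsup_ub; tauto.
- apply: fle_trans (fmeet_r _ _) _; apply: fsup_ub; tauto.
- exact: fle_trans he (fbot_le _).
Qed.

Definition compl_int (u v w : vec3) (a b : nat) : bool :=
  cf u a * cf u b * (dot v v * dot w w) + cf v a * cf v b * (dot u u * dot w w)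
  + cf w a * cf w b * (dot u u * dot v v) == ((a == b) : nat)%:Z * (dot u u * dot v v * dot w w).

Definition complb (u v w : vec3) : bool :=
  all (fun a => all (fun b => compl_int u v w a b) (iota 0 3)) (iota 0 3).

Lemma complb_ok u v w : dot u u != 0 -> dot v v != 0 -> dot w w != 0 ->
  complb u v w -> complC u v w.
Proof.
move=> nu nv nw /allP h a b a3 b3.
have ha : a \in iota 0 3 by rewrite mem_iota.
have hb : b \in iota 0 3 by rewrite mem_iota.
have := h a ha => /allP /(_ b hb); rewrite /compl_int.
move: nu nv nw; move: (dot u u) (dot v v) (dot w w) => Nu Nv Nw nu nv nw.
move=> /eqP /(congr1 (fun z : int => z%:~R : Cplx)) /= E.
rewrite !intrD !intrM in E.
have nu' : (Nu%:~R : Cplx) != 0 by rewrite intr_eq0.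
have nv' : (Nv%:~R : Cplx) != 0 by rewrite intr_eq0.
have nw' : (Nw%:~R : Cplx) != 0 by rewrite intr_eq0.
rewrite !intrM.
move: E nu' nv' nw'.
move: (Nu%:~R : Cplx) (Nv%:~R : Cplx) (Nw%:~R : Cplx) => X Y Z E nu' nv' nw'.
move: ((cf u a)%:~R * (cf u b)%:~R : Cplx) E => A E.
move: ((cf v a)%:~R * (cf v b)%:~R : Cplx) E => B E.
move: ((cf w a)%:~R * (cf w b)%:~R : Cplx) E => C E.
have G : A / X + B / Y + C / Z = (A * (Y * Z) + B * (X * Z) + C * (X * Y)) / (X * Y * Z).
  by field; rewrite nu' nv' nw'.
rewrite G E; field; by rewrite nu' nv' nw'.
Qed.

Definition tripok (vecs : seq vec3) (t : nat * nat * nat) : bool :=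
  let: (p, q, r) := t in
  let vp := nth (0,0,0) vecs p in let vq := nth (0,0,0) vecs q in let vr := nth (0,0,0) vecs r in
  [&& dot vp vp != 0, dot vq vq != 0, dot vr vr != 0, dot vp vq == 0, dot vp vr == 0,
      dot vq vr == 0 & complb vp vq vr].

Lemma dotC u v : dot u v = dot v u.
Proof. by rewrite /dot !(mulrC (cf u _)). Qed.

Definition vecs : seq vec3 := [:: (0, 0, 1); (0, 1, (-2)); (0, 1, (-1)); (0, 1, 0); (0, 1, 1); (0, 2, 1); (1, (-2), (-2)); (1, (-2), (-1)); (1, (-2), 0); (1, (-2), 1); (1, (-2), 2); (1, (-1), (-1)); (1, (-1), 0); (1, (-1), 1); (1, (-1), 2); (1, 0, (-2)); (1, 0, (-1)); (1, 0, 0); (1, 0, 1); (1, 0, 2); (1, 1, (-2)); (1, 1, (-1)); (1, 1, 0); (1, 1, 1); (1, 1, 2); (1, 2, 0); (1, 2, 1); (2, (-1), (-2)); (2, (-1), (-1)); (2, (-1), 0); (2, (-1), 1); (2, (-1), 2); (2, 0, (-1)); (2, 0, 1); (2, 1, (-1)); (2, 1, 0); (2, 1, 1); (2, 2, (-1)); (2, 2, 1)].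
Definition trips : seq (nat * nat * nat) := [:: (0, 3, 17); (0, 8, 35); (0, 12, 22); (0, 25, 29); (1, 5, 17); (2, 4, 17); (2, 11, 36); (2, 23, 28); (3, 15, 33); (3, 16, 18); (3, 19, 32); (4, 13, 34); (4, 21, 30); (6, 31, 37); (7, 18, 21); (9, 16, 23); (10, 27, 38); (11, 14, 22); (12, 20, 23); (12, 21, 24); (13, 16, 26)].
Definition ktree : tree := (Node 0 (Node 4 (Node 5 (Node 17 (Leaf 11 2) (Node 10 (Leaf 3 0) (Node 11 (Leaf 4 2) (Node 9 (Leaf 3 0) (Leaf 16 13) (Node 12 (Leaf 4 2) (Leaf 21 18) (Node 8 (Leaf 3 0) (Leaf 15 30) (Node 18 (Leaf 12 0) (Leaf 20 33) (Leaf 23 2))))) (Leaf 34 19)) (Leaf 32 14)) (Leaf 22 0)) (Node 14 (Leaf 7 1) (Node 16 (Leaf 10 4) (Leaf 27 18) (Leaf 38 1)) (Leaf 21 4)) (Leaf 17 0)) (Node 17 (Node 5 (Leaf 2 11) (Node 9 (Leaf 3 0) (Node 18 (Leaf 12 0) (Leaf 20 5) (Leaf 23 16)) (Leaf 18 11)) (Leaf 17 0)) (Leaf 14 5) (Leaf 22 0)) (Leaf 17 0)) (Node 1 (Leaf 0 3) (Node 2 (Leaf 0 8) (Node 14 (Node 4 (Leaf 1 7) (Node 13 (Node 5 (Leaf 2 6) (Node 6 (Leaf 2 4) (Node 7 (Leaf 2 4) (Leaf 23 12) (Node 3 (Leaf 0 3) (Leaf 25 28) (Node 20 (Leaf 13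 4) (Leaf 16 3) (Leaf 26 29)))) (Leaf 36 8)) (Leaf 17 3)) (Leaf 31 5) (Leaf 37 12)) (Leaf 17 3)) (Leaf 18 3) (Leaf 21 12)) (Node 6 (Node 11 (Leaf 4 2) (Leaf 13 22) (Leaf 34 8)) (Leaf 11 22) (Leaf 36 8))) (Node 14 (Leaf 7 35) (Leaf 18 3) (Node 2 (Leaf 0 3) (Leaf 12 21) (Node 5 (Node 15 (Leaf 9 35) (Leaf 16 3) (Leaf 23 2)) (Leaf 4 21) (Leaf 17 3))))) (Node 1 (Leaf 0 17) (Node 6 (Leaf 2 17) (Node 2 (Leaf 0 8) (Node 7 (Leaf 2 17) (Leaf 23 12) (Node 3 (Leaf 0 17) (Leaf 25 28) (Node 9 (Leaf 3 17) (Node 11 (Leaf 4 17) (Leaf 13 16) (Leaf 34 8)) (Leaf 18 11)))) (Leaf 22 11)) (Leaf 36 8)) (Node 2 (Leaf 0 17) (Node 7 (Leaf 2 17) (Leaf 23 12) (Node 3 (Leaf 0 17) (Leaf 25 28) (Node 10 (Leaf 3 17) (Leaf 19 28) (Node 12 (Leaf 4 17) (Leaf 21 12) (Node 8 (Leaf 3 17) (Leaf 15 30) (Node 13 (Leaf 6 33) (Node 15 (Leaf 9 35) (Leaf 16 31) (Leaf 23 28)) (Leaf 37 12))))))) (Node 6 (Leaf 2 17) (Leaf 11 22) (Node 8 (Leaf 3 17) (Leaf 15 36) (Node 11 (Leaf 4 17) (Leaf 13 22) (Node 10 (Leaf 3 17) (Leaf 19 34) (Node 18 (Leaf 12 22)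 (Leaf 20 33) (Node 9 (Leaf 3 17) (Leaf 16 23) (Node 19 (Leaf 12 22) (Leaf 21 18) (Leaf 24 32))))))))))).

Lemma ktree_ok : check vecs trips [::] ktree.
Proof. by vm_compute. Qed.
Lemma trips_ok : all (tripok vecs) trips.
Proof. by vm_compute. Qed.

Lemma S3_idem m (k : 'I_m.+3) u v w : (2 <= k)%N ->
  dot u u != 0 -> dot v v != 0 -> dot w w != 0 ->
  dot u v = 0 -> dot u w = 0 -> dot v w = 0 -> S3 k u v w * S3 k u v w = S3 k u v w.
Proof.
move=> hk nu nv nw uv uw vw.
have o1 := Pm_orth hk uv; have o2 := Pm_orth hk (etrans (dotC v u) uv).
have o3 := Pm_orth hk uw; have o4 := Pm_orth hk (etrans (dotC w u) uw).
have o5 := Pm_orth hk vw; have o6 := Pm_orth hk (etrans (dotC w v) vw).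
rewrite /S3 !mulrDl !mulrDr !Pm_idem // o1 o2 o3 o4 o5 o6.
by rewrite !addr0 !add0r.
Qed.

Lemma pos_choice m (j : 'I_m.+3) : exists k : 'I_m.+3, (2 <= k)%N /\ exists a, pos k j = Some a.
Proof.
case: (leqP 2 j) => h.
  by exists j; split => //; exists 2%N; exact: posk.
exists (@Ordinal m.+3 2 isT); split => //.
by rewrite /pos; case: j h => [[|[|j]] Hj] //= _; eexists.
Qed.

Lemma delta_bot (F : RingLocFunctor) phi (H : zariski_nat_iso F phi) m (j : 'I_m.+3) :
  fle (aa H (delta_mx j j : 'M[Cplx]_(m.+3))) (fbot _).
Proof.
have [k [hk [a ha]]] := pos_choice j.
pose b := fun i => aa H (Pm k (nth (0,0,0) vecs i)).
apply: (@check_sound _ b _ vecs trips _ _ ktree [::] ktree_ok).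
  move=> t ht.
  move/(all_nthP (0%N,0%N,0%N)): trips_ok => /(_ t ht).
  case: (nth _ trips t) => [[p q] r] /=; rewrite /b.
  move=> /andP [np /andP [nq /andP [nr /andP [/eqP pq /andP [/eqP pr /andP [/eqP qr hc]]]]]].
  move: np nq nr pq pr qr hc.
  move: (nth (0,0,0) vecs p) (nth (0,0,0) vecs q) (nth (0,0,0) vecs r) => vp vq vr.
  move=> np nq nr pq pr qr hc.
  have hC := complb_ok np nq nr hc.
  have hS := S3_idem hk np nq nr pq pr qr.
  apply: (cover_minus (e := aa H (1 - S3 k vp vq vr))).
    apply: ctx4; rewrite ?Pm_idem //; apply: Pm_orth => //; by rewrite dotC.
  apply: orth_pair.
  - by rewrite -mulmxE mul_delta_mx.
  - by rewrite mulrBl mul1r mulrBr mulr1 hS subrr subr0.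
  - by rewrite mulrBr mulr1 (delta_S hk hC ha) subrr.
  - by rewrite mulrBl mul1r (S_delta hk hC ha) subrr.
move=> u v nu nv huv; apply: orth_pair.
- exact: Pm_idem.
- exact: Pm_idem.
- exact: Pm_orth.
- by apply: Pm_orth; rewrite // dotC.
Qed.

Theorem mainTheorem12 (F : RingLocFunctor)
    (phi : forall A : comPzRingType, Fob F A -> (A -> Prop)) :
  zariski_nat_iso F phi ->
  (forall R : pzRingType, kochen_specker R -> trivial_locale (Fob F R)) /\
  (forall m : nat, trivial_locale (Fob F 'M[Cplx]_(m.+3))).
Proof.
move=> H.
have Mtriv : forall m, trivial_locale (Fob F 'M[Cplx]_(m.+3)).
  move=> m; apply: fle_top_eq.
  apply: fle_trans (ctx_std H (m.+2)) _.
  by apply: fsup_le => y [j ->]; exact: delta_bot.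
split=> // R [m [f _]].
have hh := Fmap_hom F f.
rewrite /trivial_locale -(hom_bot hh) -(hom_top hh).
by rewrite (Mtriv m).
Qed.
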